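(* For all integers $n\ge 1$ and $k\ge 0$, the number of Dyck $n$-paths having exactly $n-2k$ ascents of odd length equals \[\frac{1}{n+1}\binom{n+1}{2k+1}\binom{n+k}{k}.\]
   Context: A Dyck $n$-path is a path from $(0,0)$ to $(2n,0)$ with $n$ upsteps $U=(1,1)$ and $n$ downsteps $D=(1,-1)$ never going below the $x$-axis. An ascent is a maximal run of consecutive upsteps; its length is its number of upsteps. *)

(* Defs.v *)
From mathcomp Require Import all_boot all_algebra.
Set Implicit Arguments. Unset Strict Implicit. Unset Printing Implicit Defensive.

(* A lattice path is encoded as a sequence of booleans: true = upstep U=(1,1),
   false = downstep D=(1,-1). *)

Definition height (p : seq bool) : int :=
  (count id p)%:Z - (count negb p)%:Z.

Definition dyck_path (n : nat) (p : seq bool) : bool :=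
  [&& size p == 2 * n, count id p == n, count negb p == n &
      all (fun i => (0 <= height (take i p))%R) (iota 0 (size p).+1)].

(* lengths of the maximal runs of consecutive upsteps (ascents), in order *)
Fixpoint ascent_lengths_aux (cur : nat) (p : seq bool) : seq nat :=
  match p with
  | [::] => if cur == 0 then [::] else [:: cur]
  | true :: q => ascent_lengths_aux cur.+1 q
  | false :: q => if cur == 0 then ascent_lengths_aux 0 q
                  else cur :: ascent_lengths_aux 0 q
  end.

Definition ascent_lengths (p : seq bool) : seq nat := ascent_lengths_aux 0 p.

Definition odd_ascents (p : seq bool) : nat := count odd (ascent_lengths p).

(* Main.v *)
Require Import Defs.
From mathcomp Require Import all_boot all_algebra.
From mathcomp Require Import zify.
Import GRing.Theory Num.Theory.
Set Implicit Arguments. Unset Strict Implicit. Unset Printing Implicit Defensive.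

Definition good (s : seq nat) : bool :=
  all (fun i => i <= sumn (take i s)) (iota 0 (size s)).

Lemma goodP s : reflect (forall i, i < size s -> i <= sumn (take i s)) (good s).
Proof.
apply: (iffP allP) => H i Hi.
  by apply: H; rewrite mem_iota.
by apply: H; move: Hi; rewrite mem_iota.
Qed.

Lemma sum_take_rot1 s r i : r <= size s -> i <= size s - r ->
  sumn (take i (rot r s)) + sumn (take r s) = sumn (take (r + i) s).
Proof.
move=> Hr Hi; rewrite /rot takel_cat ?size_drop // takeD sumn_cat addnC //.
Qed.

Lemma sum_take_rot2 s r i : r <= size s -> size s - r < i -> i <= size s ->
  sumn (take i (rot r s)) + sumn (take r s) = sumn s + sumn (take (i - (size s - r)) s).
Proof.
move=> Hr Hi Hi2; rewrite /rot take_cat size_drop ltnNge (ltnW Hi) /=.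
rewrite take_takel; last by lia.
rewrite sumn_cat. have E := congr1 sumn (cat_take_drop r s). rewrite sumn_cat in E. lia.
Qed.

Section Cyc.
Variables (s : seq nat) (N : nat).
Hypotheses (Hs : size s = N) (HN : 0 < N) (Hsum : sumn s = N.-1).
Let P j := sumn (take j s).
Let G j := P j + N - j.

Lemma P0 : P 0 = 0. Proof. by rewrite /P take0. Qed.
Lemma PN : P N = N.-1. Proof. by rewrite /P take_oversize ?Hs. Qed.

Lemma cyc_char r : r < N ->
  good (rot r s) <-> (forall j, j < N -> (j < r -> G r < G j) /\ (r <= j -> G r <= G j)).
Proof.
move=> Hr; have P0' := P0; have PN' := PN.
rewrite /G; split.
  move/goodP; rewrite size_rot Hs => H j Hj; split => Hjr.
    case: j Hj Hjr => [|j] Hj Hjr.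
      have := H (N - r) ltac:(lia).
      have := @sum_take_rot1 s r (N - r) ltac:(lia) ltac:(lia).
      rewrite -/(P r) ?Hs; have -> : r + (N - r) = N by lia.
      rewrite -/(P N); lia.
    have := H (j.+1 + (N - r)) ltac:(lia).
    have := @sum_take_rot2 s r (j.+1 + (N - r)) ltac:(lia) ltac:(lia) ltac:(lia).
    rewrite -/(P r) ?Hs ?Hsum; have -> : j.+1 + (N - r) - (N - r) = j.+1 by lia.
    rewrite -/(P j.+1); lia.
  have := H (j - r) ltac:(lia).
  have := @sum_take_rot1 s r (j - r) ltac:(lia) ltac:(lia).
  rewrite -/(P r) ?Hs; have -> : r + (j - r) = j by lia.
  rewrite -/(P j); lia.
move=> H; apply/goodP; rewrite size_rot Hs => i Hi.
case: (leqP i (N - r)) => Hir.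
  have := @sum_take_rot1 s r i ltac:(lia) ltac:(lia).
  rewrite -/(P r) -/(P (r + i)).
  case: (ltnP (r + i) N) => Hri.
    have [_ H2] := H (r + i) Hri; have := H2 ltac:(lia); lia.
  have [H1 _] := H 0 HN; have := H1 ltac:(lia).
  have -> : r + i = N by lia.
  lia.
have := @sum_take_rot2 s r i ltac:(lia) ltac:(lia) ltac:(lia).
rewrite -/(P r) ?Hs ?Hsum -/(P (i - (N - r))).
have [H1 _] := H (i - (N - r)) ltac:(lia); have := H1 ltac:(lia); lia.
Qed.

Lemma cyc_unique : exists r, r < N /\ forall r', r' < N -> (good (rot r' s) <-> r' = r).
Proof.
have [m Hm Hmin] : exists2 m, m < N & forall j, j < N -> G m <= G j.
  case: N HN G => // N' _ G'.
  exists [arg min_(i < (ord0 : 'I_N'.+1)) G' i] => //.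
  case: arg_minnP => // i _ Hi j Hj; exact: (Hi (Ordinal Hj)).
have Ex : exists r, (r < N) && (G r == G m) by exists m; rewrite Hm eqxx.
pose r := ex_minn Ex.
have [Hr1 Hr2] : (r < N) /\ G r = G m.
  by rewrite /r; case: ex_minnP => x /andP[H1 /eqP H2] _.
have Hr3 : forall j, j < N -> G j = G m -> r <= j.
  move=> j Hj Hjm; rewrite /r; case: ex_minnP => x _ Hx; apply: Hx.
  by rewrite Hj Hjm eqxx.
have Hchar : forall j, j < N -> (j < r -> G r < G j) /\ (r <= j -> G r <= G j).
  move=> j Hj; split => Hjr.
    rewrite ltn_neqAle Hr2 Hmin // andbT; apply/eqP => E.
    have := Hr3 j Hj (esym E); lia.
  by rewrite Hr2 Hmin.
exists r; split => // r' Hr'; split.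
  move/(cyc_char Hr') => H'.
  case: (ltngtP r' r) => // C.
    have [H1 _] := Hchar r' Hr'; have [_ H2] := H' r Hr1; have := H1 C; have := H2 (ltnW C); lia.
  have [H1 _] := H' r Hr1; have [_ H2] := Hchar r' Hr'; have := H1 C; have := H2 (ltnW C); lia.
by move=> ->; apply/(cyc_char Hr1).
Qed.
End Cyc.

Fixpoint dec (c : seq nat) : seq bool :=
  match c with [::] => [::] | a :: c' => nseq a true ++ false :: dec c' end.

Fixpoint enc_aux (cur : nat) (p : seq bool) : seq nat :=
  match p with
  | [::] => [::]
  | true :: q => enc_aux cur.+1 q
  | false :: q => cur :: enc_aux 0 q
  end.

Lemma count_id_dec c : count id (dec c) = sumn c.
Proof. elim: c => //= a c IH; rewrite count_cat count_nseq /= IH; lia. Qed.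

Lemma count_negb_dec c : count negb (dec c) = size c.
Proof. elim: c => //= a c IH; rewrite count_cat count_nseq /= IH; lia. Qed.

Lemma size_dec c : size (dec c) = sumn c + size c.
Proof. elim: c => //= a c IH; rewrite size_cat size_nseq /= IH; lia. Qed.

Lemma enc_nseq cur a q :
  enc_aux cur (nseq a true ++ false :: q) = (cur + a) :: enc_aux 0 q.
Proof. elim: a cur => [|a IH] cur /=; first by rewrite addn0. by rewrite IH addnS. Qed.

Lemma encK c : enc_aux 0 (dec c) = c.
Proof. elim: c => //= a c IH; by rewrite enc_nseq IH. Qed.

Lemma decK p cur : last true p = false -> dec (enc_aux cur p) = nseq cur true ++ p.
Proof.
elim: p cur => //= x q IH cur.
case: x => /= Hl.
  case: q IH Hl => // y q IH Hl.
  rewrite IH //=.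
  by elim: cur {IH Hl} => //= c IHc; rewrite IHc.
case: q IH Hl => [|y q] IH Hl /=; first by [].
by rewrite IH.
Qed.

Lemma asc_nseq cur a q :
  ascent_lengths_aux cur (nseq a true ++ false :: q) =
  if cur + a == 0 then ascent_lengths_aux 0 q else (cur + a) :: ascent_lengths_aux 0 q.
Proof. elim: a cur => [|a IH] cur /=; first by rewrite addn0. by rewrite IH addnS. Qed.

Lemma odd_asc_dec c : odd_ascents (dec c) = count odd c.
Proof.
rewrite /odd_ascents /ascent_lengths.
elim: c => //= a c IH; rewrite asc_nseq add0n.
by case: a => //= a; rewrite IH.
Qed.

Lemma height_cat s1 s2 : height (s1 ++ s2) = (height s1 + height s2)%R.
Proof. rewrite /height !count_cat. lia. Qed.

Lemma height_nseq a : height (nseq a true) = (Posz a).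
Proof. rewrite /height !count_nseq /=. lia. Qed.

Lemma height_cons x s : height (x :: s) = ((if x then 1 else -1) + height s)%R.
Proof. rewrite /height /=; case: x => /=; lia. Qed.

Lemma take_dec_cons a m q :
  take (a + m).+1 (nseq a true ++ false :: q) = nseq a true ++ false :: take m q.
Proof.
rewrite take_cat size_nseq ltnNge leqW ?leq_addr //=.
by have -> : (a + m).+1 - a = m.+1 by lia.
Qed.

Lemma L c (h : int) :
  (forall m, (0 <= h + height (take m (dec c)))%R) <->
  (forall i, i <= size c -> (0 <= h + (Posz (sumn (take i c))) - (Posz i))%R).
Proof.
elim: c h => [|a c IH] h /=.
  split => H.
    move=> i; rewrite leqn0 => /eqP ->; have := H 0; rewrite ?take0 /height /=; lia.
  move=> m; have := H 0 (leqnn _); rewrite ?take0 /height /=; lia.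
split => H.
  have H0 : (0 <= h)%R by have := H 0; rewrite ?take0 /height /=; lia.
  have Hc : forall m, (0 <= (h + (Posz a) - 1) + height (take m (dec c)))%R.
    move=> m; have := H (a + m).+1; rewrite take_dec_cons height_cat height_nseq height_cons.
    lia.
  move/IH: Hc => Hc [|i] Hi; first by rewrite ?take0 /=; lia.
  have := Hc i Hi; rewrite /=; lia.
have H0 : (0 <= h)%R by have := H 0 isT; rewrite ?take0 /=; lia.
have Hc : forall i, i <= size c -> (0 <= (h + (Posz a) - 1) + (Posz (sumn (take i c))) - (Posz i))%R.
  by move=> i Hi; have := H i.+1 Hi; rewrite /=; lia.
move/IH: Hc => Hc m.
case: (leqP m a) => Hm.
  rewrite takel_cat; last by rewrite size_nseq.
  rewrite take_nseq // height_nseq; lia.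
have -> : m = (a + (m - a.+1)).+1 by lia.
rewrite take_dec_cons height_cat height_nseq height_cons.
have := Hc (m - a.+1); lia.
Qed.

Lemma dyck_decP n c : size c = n -> sumn c = n ->
  dyck_path n (dec c) <-> (forall i, i <= size c -> i <= sumn (take i c)).
Proof.
move=> Hs Hsum. have Sd : size (dec c) = n + n by rewrite size_dec Hs Hsum.
rewrite /dyck_path size_dec count_id_dec count_negb_dec Hs Hsum.
have -> : (n + n == 2 * n) by apply/eqP; lia.
rewrite !eqxx !andTb.
have E1 : (forall m, (0 <= 0 + height (take m (dec c)))%R) <->
          (forall i, i <= size c -> (0 <= 0 + (Posz (sumn (take i c))) - (Posz i))%R)
  by apply: L.
split.
  move/allP => H.
  have H' : forall m, (0 <= 0 + height (take m (dec c)))%R.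
    move=> m; rewrite add0r; case: (leqP m (size (dec c))) => Hm.
      by apply: H; rewrite mem_iota; lia.
    rewrite take_oversize ?(ltnW Hm) //.
    have Hm' : (size (dec c)) \in iota 0 (n + n).+1 by rewrite mem_iota; lia.
    by have := H _ Hm'; rewrite take_size.
  move/E1: H' => H' i Hi; have := H' i ltac:(lia); lia.
move=> H.
have H' : forall i, i <= size c -> (0 <= 0 + (Posz (sumn (take i c))) - (Posz i))%R.
  by move=> i Hi; have := H i ltac:(lia); lia.
move/E1: H' => H'; apply/allP => m _; have := H' m; rewrite add0r; exact.
Qed.

Lemma dyck_last n p : 0 < n -> dyck_path n p -> last true p = false.
Proof.
move=> Hn /and4P[/eqP Hs /eqP H1 /eqP H2 /allP H].
move: Hs H1 H2 H; case/lastP: p => [|q x]; first by move=> /=; lia.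
rewrite last_rcons; case: x => // Hs H1 H2 H.
have := H (size q); rewrite mem_iota size_rcons.
rewrite -cats1 take_size_cat // /height.
move: H1 H2; rewrite -!cats1 !count_cat /=.
move=> H1 H2 H3; have := H3 ltac:(lia); lia.
Qed.

Lemma good_rcons c : good (rcons c 0) <-> (forall i, i <= size c -> i <= sumn (take i c)).
Proof.
split.
  move/goodP => H i Hi; have := H i; rewrite size_rcons -cats1 takel_cat //; apply; lia.
move=> H; apply/goodP => i; rewrite size_rcons ltnS -cats1 => Hi.
by rewrite takel_cat //; apply: H.
Qed.

Lemma le_sumn (s : seq nat) x : x \in s -> x <= sumn s.
Proof.
elim: s => //= y s IH; rewrite inE => /orP[/eqP ->|/IH]; first exact: leq_addr.
move=> H; apply: leq_trans H _; exact: leq_addl.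
Qed.

Definition tup_of n (s : seq nat) : n.+1.-tuple 'I_n.+1 :=
  [tuple (inord (nth 0 s i) : 'I_n.+1) | i < n.+1].

Lemma tup_of_val n s : size s = n -> sumn s = n -> map val (tup_of n s) = rcons s 0.
Proof.
move=> Hs Hsum.
apply: (@eq_from_nth _ 0); first by rewrite size_map size_tuple size_rcons Hs.
move=> i; rewrite size_map size_tuple => Hi.
rewrite (nth_map ord0) ?size_tuple //.
have -> : nth ord0 (tup_of n s) i = tnth (tup_of n s) (Ordinal Hi) by rewrite (tnth_nth ord0).
change (nat_of_ord (tnth (tup_of n s) (Ordinal Hi)) = nth 0 (rcons s 0) i). rewrite tnth_mktuple inordK /=; last first.
  case: (ltnP i (size s)) => Hi'.
    by rewrite ltnS -Hsum; apply: le_sumn; apply: mem_nth.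
  by rewrite nth_default.
rewrite nth_rcons; case: ltnP => // Hi'.
rewrite nth_default //; case: eqP => //.
Qed.

Definition Bset n j := [set t : n.+1.-tuple 'I_n.+1 |
  (sumn (map val t) == n) && good (map val t) && (count odd (map val t) == j)].

Definition Aset n j := [set p : (2 * n).-tuple bool | dyck_path n p && (odd_ascents p == j)].

Lemma dyck_facts n p : 0 < n -> dyck_path n p ->
  [/\ p = dec (enc_aux 0 p), size (enc_aux 0 p) = n & sumn (enc_aux 0 p) = n].
Proof.
move=> Hn Hd; have Hl := dyck_last Hn Hd.
have Ep : dec (enc_aux 0 p) = p by rewrite decK.
move: (Hd) => /and4P[_ /eqP H1 /eqP H2 _].
split => //.
  by rewrite -count_negb_dec Ep.
by rewrite -count_id_dec Ep.
Qed.

Lemma dyck_count n j : 0 < n -> #|Aset n j| = #|Bset n j|.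
Proof.
move=> Hn.
pose h (p : (2 * n).-tuple bool) := tup_of n (enc_aux 0 p).
have hinj : {in Aset n j &, injective h}.
  move=> p1 p2; rewrite !inE => /andP[D1 _] /andP[D2 _] E.
  have [E1 S1 U1] := dyck_facts Hn D1; have [E2 S2 U2] := dyck_facts Hn D2.
  have := congr1 (fun t : n.+1.-tuple 'I_n.+1 => map val t) E; rewrite /h !tup_of_val // => /rcons_inj [] Ec.
  by apply: val_inj; rewrite /= E1 E2 Ec.
suff -> : Bset n j = h @: Aset n j by rewrite card_in_imset.
apply/setP => t; apply/idP/imsetP.
  rewrite inE => /andP[/andP[/eqP Hs Hg] /eqP Hc].
  case/lastP E: (map val t) Hs Hg Hc => [|c x].
    by move: (congr1 size E); rewrite size_map size_tuple.
  move=> Hs Hg Hc.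
  have Sc : size c = n by move: (congr1 size E); rewrite size_map size_tuple size_rcons; case.
  have Hg' := Hg; move/goodP: Hg' => Hg'.
  have := Hg' n; rewrite size_rcons Sc -cats1 takel_cat ?Sc // take_oversize ?Sc // => Hn'.
  move: Hs; rewrite -cats1 sumn_cat /= addn0 => Hs.
  have Hx : x = 0 by have := Hn' (leqnn _); lia.
  have Uc : sumn c = n by lia.
  subst x.
  have Hsz : size (dec c) == 2 * n by rewrite size_dec Sc Uc; apply/eqP; lia.
  exists (Tuple Hsz).
    rewrite inE /=; apply/andP; split.
      apply/(dyck_decP Sc Uc); apply/good_rcons; exact Hg.
    rewrite odd_asc_dec -Hc -cats1 count_cat /= addn0. by rewrite addn0.
  apply: val_inj; apply: (inj_map (@ord_inj _)).
  by rewrite /h /= encK tup_of_val // E cats1.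
move=> [p]; rewrite inE => /andP[Dp /eqP Op] ->.
have [E1 S1 U1] := dyck_facts Hn Dp.
rewrite inE /h tup_of_val // -cats1 sumn_cat count_cat U1 /= addn0 addn0 eqxx /=.
rewrite cats1; apply/andP; split.
  by apply/good_rcons; apply/(dyck_decP S1 U1); rewrite -E1.
by rewrite -Op {2}E1 odd_asc_dec addn0.
Qed.

Lemma sumn_tuple m M (t : m.-tuple 'I_M) :
  sumn (map val t) = \sum_(i < m) (tnth t i : nat).
Proof. by rewrite sumnE big_map big_tuple. Qed.

Lemma count_tuple m M (a : pred nat) (t : m.-tuple 'I_M) :
  count a (map val t) = \sum_(i < m) (a (tnth t i) : nat).
Proof. by rewrite -sumn_count sumnE !big_map big_tuple. Qed.

Lemma sum_in_card m (O : {set 'I_m}) : \sum_(i < m) ((i \in O) : nat) = #|O|.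
Proof. by rewrite -sum1_card [RHS]big_mkcond /=; apply: eq_bigr => i _; case: (i \in O). Qed.

Lemma le_sum_term m (F : 'I_m -> nat) i : F i <= \sum_(i < m) F i.
Proof. by rewrite (bigD1 i) //= leq_addr. Qed.

Section Count.
Variables (n k j : nat).
Hypothesis Hn : n = j + 2 * k.
Local Notation N := n.+1.
Local Notation T := (N.-tuple 'I_N).

Definition Sset := [set t : T | (sumn (map val t) == n) && (count odd (map val t) == j)].

Definition phi (x : {set 'I_N} * (N.-tuple 'I_k.+1)) : T :=
  [tuple (inord (2 * tnth x.2 i + (i \in x.1)) : 'I_N) | i < N].

Definition Dset := setX [set O : {set 'I_N} | #|O| == j]
                        [set e : N.-tuple 'I_k.+1 | \sum_(i <- e) i == k].

Lemma phi_val x i : x \in Dset -> (tnth (phi x) i : nat) = 2 * tnth x.2 i + (i \in x.1).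
Proof.
case: x => O e; rewrite inE /= !inE => /andP[/eqP HO /eqP He].
rewrite tnth_mktuple inordK //.
have := le_sum_term (fun i => (tnth e i : nat)) i.
have -> : \sum_(i < N) (tnth e i : nat) = k by move: He; rewrite big_tuple.
case Hi : (i \in O) => /=.
  have : 0 < #|O| by apply/card_gt0P; exists i.
  rewrite HO; lia.
lia.
Qed.

Lemma card_Dset : #|Dset| = 'C(N, j) * 'C(n + k, n).
Proof. by rewrite cardsX card_draws card_ord card_ord_partitions. Qed.

Lemma phi_inj : {in Dset &, injective phi}.
Proof.
move=> [O e] [O' e'] Hx Hy E.
have Ei : forall i, 2 * tnth e i + (i \in O) = 2 * tnth e' i + (i \in O').
  by move=> i; rewrite -(phi_val i Hx) -(phi_val i Hy) E.
have Eb : forall i, (i \in O) = (i \in O').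
  move=> i; have := Ei i; case: (i \in O); case: (i \in O') => //=; lia.
congr pair; first by apply/setP => i; exact: Eb.
apply: eq_from_tnth => i; apply: ord_inj; have := Ei i; rewrite Eb => /eqP; rewrite eqn_add2r eqn_pmul2l // => /eqP; exact.
Qed.

Lemma phi_image : phi @: Dset = Sset.
Proof.
apply/setP => t; apply/imsetP/idP.
  move=> [x Hx ->]; rewrite inE sumn_tuple count_tuple.
  have Hv := fun i => phi_val i Hx.
  case: x Hx Hv => O e; rewrite inE /= !inE => /andP[/eqP HO /eqP He] Hv.
  have S1 : \sum_(i < N) (tnth (phi (O, e)) i : nat) = 2 * k + j.
    rewrite (eq_bigr _ (fun i _ => Hv i)) big_split /= -big_distrr /= sum_in_card HO.
    by move: He; rewrite big_tuple => ->.
  have S2 : \sum_(i < N) (odd (tnth (phi (O, e)) i) : nat) = j.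
    rewrite -HO -sum_in_card; apply: eq_bigr => i _.
    by rewrite Hv oddD oddM /=; case: (i \in O).
  rewrite S1 S2 Hn eqxx andbT; apply/eqP; lia.
rewrite inE => /andP[/eqP Hs /eqP Hc].
rewrite sumn_tuple in Hs; rewrite count_tuple in Hc.
have Hsplit : \sum_(i < N) (tnth t i : nat) =
   \sum_(i < N) (odd (tnth t i) : nat) + 2 * \sum_(i < N) ((tnth t i)./2).
  rewrite big_distrr -big_split /=; apply: eq_bigr => i _.
  by rewrite -{1}(odd_double_half (tnth t i)) -muln2 mulnC.
have Hh : \sum_(i < N) ((tnth t i)./2) = k by rewrite Hs Hc in Hsplit; lia.
have Hb : forall i, (tnth t i)./2 < k.+1 by move=> i; rewrite ltnS -Hh (le_sum_term (fun i => (tnth t i)./2)).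
pose e := [tuple (inord ((tnth t i)./2) : 'I_k.+1) | i < N].
pose O := [set i | odd (tnth t i)].
have HD : (O, e) \in Dset.
  rewrite inE /= !inE; apply/andP; split.
    by rewrite -sum_in_card -Hc; apply/eqP/eq_bigr => i _; rewrite inE.
  apply/eqP; rewrite big_tuple -[RHS]Hh; apply/eq_bigr => i _; by rewrite tnth_mktuple inordK.
exists (O, e) => //.
apply: eq_from_tnth => i; apply: ord_inj; rewrite phi_val //= tnth_mktuple inordK // inE.
by rewrite -{1}(odd_double_half (tnth t i)) -muln2 mulnC addnC.
Qed.

Lemma card_Sset : #|Sset| = 'C(N, j) * 'C(n + k, n).
Proof. by rewrite -phi_image card_in_imset ?card_Dset //; exact: phi_inj. Qed.
End Count.

Lemma perm_rot' (T : eqType) (r : nat) (s : seq T) : perm_eq (rot r s) s.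
Proof. by rewrite perm_rot perm_refl. Qed.
Lemma perm_rotr' (T : eqType) (r : nat) (s : seq T) : perm_eq (rotr r s) s.
Proof. by rewrite perm_rotr perm_refl. Qed.

Lemma cycle_count n j : n.+1 * #|Bset n j| = #|Sset n j|.
Proof.
have key : forall t, t \in Sset n j -> \sum_(r < n.+1) (good (rot r (map val t)) : nat) = 1.
  move=> t; rewrite inE => /andP[/eqP Hs _].
  have [r0 [Hr0 Hu]] := @cyc_unique (map val t) n.+1
     ltac:(by rewrite size_map size_tuple) isT ltac:(by rewrite Hs).
  rewrite (bigD1 (Ordinal Hr0)) //=.
  rewrite big1 ?addn0; first by have -> := (Hu r0 Hr0).2 erefl.
  move=> r Hr; case E: (good _) => //.
  have := (Hu r (ltn_ord r)).1 E => Er.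
  move: Hr; have -> : r = Ordinal Hr0 by apply: ord_inj.  by rewrite eqxx.
have step : forall r : 'I_n.+1,
    \sum_(t in Sset n j) (good (rot r (map val t)) : nat) = #|Bset n j|.
  move=> r.
  rewrite (eq_bigr (fun t : n.+1.-tuple 'I_n.+1 => if good (rot r (map val t)) then 1 else 0)); last first.
    by move=> t _; case: (good _).
  rewrite -big_mkcondr sum1dep_card.
  have rinj : {in [set t | (t \in Sset n j) && good (rot r (map val t))] &, injective (fun t : n.+1.-tuple 'I_n.+1 => rot_tuple r t)}.
    by move=> t1 t2 _ _ /(congr1 val) /= /rot_inj E; apply: val_inj.
  suff -> : Bset n j = (fun t : n.+1.-tuple 'I_n.+1 => rot_tuple r t) @:
       [set t | (t \in Sset n j) && good (rot r (map val t))] by rewrite card_in_imset.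
  apply/setP => b; apply/idP/imsetP.
    rewrite !inE => /andP[/andP[/eqP Hs Hg] /eqP Hc].
    exists (rotr_tuple r b); last by apply: val_inj; rewrite /= rotrK.
    rewrite !inE /= map_rotr rotrK Hg andbT (perm_sumn (perm_rotr' _ _)) Hs eqxx /=.
    by rewrite (permP (perm_rotr' _ _)) Hc.
  move=> [t]; rewrite !inE => /andP[/andP[/eqP Hs /eqP Hc] Hg] ->.
  rewrite /= map_rot (perm_sumn (perm_rot' _ _)) Hs eqxx Hg /=.
  by rewrite (permP (perm_rot' _ _)) Hc.
transitivity (\sum_(t in Sset n j) \sum_(r < n.+1) (good (rot r (map val t)) : nat)).
  rewrite exchange_big /= (eq_bigr _ (fun r _ => step r)) big_const_ord iter_addn_0.
  by rewrite mulnC.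
by rewrite -sum1_card; apply: eq_bigr => t Ht; rewrite key.
Qed.

Theorem mainTheorem8 (n k : nat) (hn : 1 <= n) :
  (#|[set p : (2 * n).-tuple bool |
       dyck_path n p && (Posz (odd_ascents p) == (Posz n - Posz (2 * k))%R)]|%:R : rat)
  = (1 / (n.+1)%:R * ('C(n.+1, (2 * k).+1))%:R * ('C(n + k, k))%:R)%R.
Proof.
case: (leqP (2 * k) n) => Hk; last first.
  rewrite bin_small; last by lia.
  rewrite mulr0 mul0r.
  have -> : [set p : (2 * n).-tuple bool |
       dyck_path n p && (Posz (odd_ascents p) == (Posz n - Posz (2 * k))%R)] = set0.
    apply/setP => p; rewrite !inE; case: (dyck_path n p) => //=; apply/eqP; lia.
  by rewrite cards0.
have -> : [set p : (2 * n).-tuple bool |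
       dyck_path n p && (Posz (odd_ascents p) == (Posz n - Posz (2 * k))%R)] = Aset n (n - 2 * k).
  apply/setP => p; rewrite !inE; congr (_ && _); apply/eqP/eqP; lia.
rewrite dyck_count //.
have C := cycle_count n (n - 2 * k).
rewrite (@card_Sset n k (n - 2 * k)) in C; last by lia.
have E1 : 'C(n.+1, n - 2 * k) = 'C(n.+1, (2 * k).+1).
  by rewrite -(@bin_sub n.+1 (2 * k).+1) ?subSS //; lia.
have E2 : 'C(n + k, n) = 'C(n + k, k).
  by rewrite -(@bin_sub (n + k) k) ?addnK ?leq_addl.
rewrite E1 E2 in C.
apply: (@mulfI _ (n.+1)%:R); first by rewrite pnatr_eq0.
rewrite -natrM C natrM div1r !mulrA mulfV ?mul1r // pnatr_eq0 //.
Qed.
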